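(* Consider the coupled opinion–network system described in the context with memory weight dynamics, and assume there is a constant $c_\phi>0$ with $\phi(r)>c_\phi$ for all $r\in[-2,2]$. Then the population reaches consensus (there exists $x^*$ with $x_i(t)\to x^*$ for all $i$), and for all $i\neq j$, $w_{ij}(t)\to\phi(0)>0$ as $t\to\infty$, i.e. the network becomes fully connected with edge weight $\phi(0)$.
   Context: There are $N$ individuals with opinions $x_i(t)\in[-1,1]$ and edge weights $w_{ij}(t)\in[0,1]$. The degree is $k_i=\sum_{j=1}^N w_{ij}$. With interaction function $\phi:[-2,2]\to[0,1]$, the system with memory weight dynamics is $\frac{dx_i}{dt}=\frac{1}{k_i}\sum_{j\neq i} w_{ij}\,\phi(x_j-x_i)(x_j-x_i)$, $\frac{dw_{ij}}{dt}=\phi(x_j-x_i)-w_{ij}$ for $i\neq j$, and $w_{ii}\equiv 1$. Standing assumptions: $\phi$ is Lipschitz continuous, even, and $\phi(0)>0$; $x_1(0)\le\dots\le x_N(0)$; $w_{ii}=1$; the initial network $w(0)$ is strongly connected (for all $i,j$ there is a sequence $i=i_0,\dots,i_m=j$ with $w_{i_n i_{n+1}}(0)>0$). *)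

(* Defs.v *)
From HB Require Import structures.
From mathcomp Require Import all_boot all_order all_algebra.
From mathcomp Require Import all_classical all_reals all_analysis.
Set Implicit Arguments. Unset Strict Implicit. Unset Printing Implicit Defensive.
Import Order.TTheory GRing.Theory Num.Theory.
Import numFieldNormedType.Exports.
Local Open Scope ring_scope.

Definition degree (R : realType) (N : nat) (W : 'I_N -> 'I_N -> R) (i : 'I_N) : R :=
  \sum_(j < N) W i j.

Definition opinion_rhs (R : realType) (N : nat) (phi : R -> R)
    (X : 'I_N -> R) (W : 'I_N -> 'I_N -> R) (i : 'I_N) : R :=
  (degree W i)^-1 *
    \sum_(j < N | j != i) W i j * phi (X j - X i) * (X j - X i).

Definition strongly_connected (R : realType) (N : nat) (W : 'I_N -> 'I_N -> R) : Prop :=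
  forall i j : 'I_N, exists s : seq 'I_N,
    path (fun a b => 0 < W a b) i s /\ last i s = j.

Definition lipschitz_on_m22 (R : realType) (phi : R -> R) : Prop :=
  exists L : R, forall r s : R, -2 <= r <= 2 -> -2 <= s <= 2 ->
    `|phi r - phi s| <= L * `|r - s|.

(* Main.v *)
Require Import Defs.
From HB Require Import structures.
From mathcomp Require Import all_boot all_order all_algebra.
From mathcomp Require Import all_classical all_reals all_analysis.
From mathcomp Require Import ring lra.
Import Order.TTheory GRing.Theory Num.Theory.
Import numFieldNormedType.Exports.
Local Open Scope classical_set_scope.
Local Open Scope ring_scope.

Lemma deriv_neg_right (R : realType) (g : R -> R) (s d : R) :
  is_derive s 1 g d -> d < 0 -> \forall t \near s^'+, g t < g s.
Proof.
move=> [dv dval] dlt.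
have := @cvgr_lt R _ _ _ _ _ dv; rewrite -/(derive g s 1) dval => /(_ _ 0 dlt).
rewrite near_withinE => /nbhs_ballP[e e0 He].
apply/nbhs_ballP; exists e => // t /= Hst st.
have := He (t - s) _ _.
rewrite /= /shift /= -[(t - s)%:A]/((t-s) * 1) mulr1 subrK /ball /= sub0r normrN.
rewrite -subr_gt0 in st.
rewrite -[_ *: _]/(_ * _) pmulr_rlt0 ?invr_gt0 // subr_lt0; apply=> //; last by rewrite gt_eqF.
by move: Hst; rewrite /ball /= distrC.
Qed.

Lemma is_derive_lin (R : realType) (f : R -> R) (c t df : R) :
  is_derive t 1 f df -> is_derive t 1 (fun u => f u + c * u) (df + c).
Proof.
move=> H.
have H2 : is_derive t 1 (fun u : R => c * u) c.
  have := @is_deriveZ R R R id c t 1 1 (is_derive_id t 1).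
  by rewrite /GRing.scale /= mulr1.
exact: (@is_deriveD R R R f (fun u => c * u) t 1 df c H H2).
Qed.

Lemma derive_cont (R : realType) (f : R -> R) (t df : R) :
  is_derive t 1 f df -> {for t, continuous f}.
Proof. by move=> [H _]; exact/differentiable_continuous/derivable1_diffP. Qed.

Lemma cont_lt_near (R : realType) (f : R -> R) (t L : R) :
  {for t, continuous f} -> f t < L -> exists2 e, 0 < e & forall u, `|t - u| < e -> f u < L.
Proof.
move=> cf ft.
have H := @cvgr_lt R R (nbhs t) _ f (f t) cf L ft.
have [e e0 He] := (@nbhs_ballP R R t _).1 (H _).
by exists e => // u Hu; apply: He.
Qed.

Lemma cont_gt_near (R : realType) (f : R -> R) (t L : R) :
  {for t, continuous f} -> L < f t -> exists2 e, 0 < e & forall u, `|t - u| < e -> L < f u.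
Proof.
move=> cf ft.
have H := @cvgr_gt R R (nbhs t) _ f (f t) cf L ft.
have [e e0 He] := (@nbhs_ballP R R t _).1 (H _).
by exists e => // u Hu; apply: He.
Qed.

Lemma near_right_of (R : realType) (s : R) (P : R -> Prop) (e : R) : 0 < e ->
  (forall u, s < u -> u < s + e -> P u) -> \forall t \near s^'+, P t.
Proof.
move=> e0 H; apply/nbhs_ballP; exists e => // u /= Hu su.
apply: H => //; move: Hu; rewrite /ball /= ltr0_norm ?subr_lt0 //.
by rewrite opprB ltrBlDl.
Qed.

Lemma key (R : realType) n (f df : 'I_n -> R -> R) (T k : R) :
  (forall t, T <= t -> forall i, is_derive t 1 (f i) (df i t)) ->
  (forall t, T <= t -> forall i, (forall j, f j t <= f i t) -> df i t <= - k) ->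
  forall t1 t2 L, T <= t1 -> t1 <= t2 -> (forall j, f j t1 <= L) ->
  forall j, f j t2 <= L - k * (t2 - t1).
Proof.
move=> hd hm t1 t2 L Tt1 t12 hL j0.
rewrite leNgt; apply/negP => hj0.
have t12s : t1 < t2.
  rewrite lt_neqAle t12 andbT; apply/negP => /eqP E; subst t2.
  by move: hj0; rewrite subrr mulr0 subr0 ltNge hL.
set D := f j0 t2 - (L - k * (t2 - t1)).
have D0 : 0 < D by rewrite subr_gt0.
have d0 : 0 < t2 - t1 by rewrite subr_gt0.
set eps := D / (t2 - t1) / 2.
have eps0 : 0 < eps by rewrite divr_gt0 // divr_gt0.
set c := k - eps.
pose g j t := f j t + c * t.
pose L' := L + c * t1.
have gd t : T <= t -> forall j, is_derive t 1 (g j) (df j t + c).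
  by move=> Tt j; apply: is_derive_lin; apply: hd.
have gc t : T <= t -> forall j, {for t, continuous (g j)}.
  by move=> Tt j; apply: (@derive_cont _ (g j) t _ (gd t Tt j)).
have hg2 : L' < g j0 t2.
  rewrite /g /L' /c -subr_gt0.
  have -> : f j0 t2 + (k - eps) * t2 - (L + (k - eps) * t1) = D - eps * (t2 - t1).
    by rewrite /D; ring.
  rewrite /eps -mulrA [_^-1 * _]mulrC mulrA divfK ?gt_eqF //.
  by rewrite subr_gt0 ltr_pdivrMr // ltr_pMr // ltr1n.
pose S := [set t | t1 <= t <= t2 /\ forall j, g j t <= L'].
have St1 : S t1 by split; [rewrite lexx t12 | move=> j; rewrite /g /L' lerD2r hL].
have ubS : ubound S t2 by move=> u [/andP[_ ->]].
have hubS : has_ubound S by exists t2.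
set s := sup S.
have t1s : t1 <= s by apply: (ub_le_sup hubS).
have st2 : s <= t2 by apply: ge_sup => //; exists t1.
have Ts : T <= s by apply: le_trans t1s.
have gs : forall j, g j s <= L'.
  move=> j; rewrite leNgt; apply/negP => Hj.
  have [e e0 He] := @cont_gt_near _ (g j) s L' (gc s Ts j) Hj.
  have : s <= s - e.
    apply: ge_sup; first by exists t1.
    move=> u [/andP[t1u ut2] Hu]; rewrite leNgt; apply/negP => Hsu.
    have us : u <= s by apply: (ub_le_sup hubS); split => //; rewrite t1u ut2.
    have := He u; rewrite ger0_norm ?subr_ge0 // ltrBlDr -ltrBlDl => /(_ Hsu).
    by rewrite ltNge Hu.
  by move=> H; lra.
have st2' : s < t2.
  rewrite lt_neqAle st2 andbT; apply/negP => /eqP E.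
  by move: (gs j0); rewrite E leNgt hg2.
have nearB : forall j, \forall t \near s^'+, g j t <= L'.
  move=> j; have [Hlt|Heq] := ltP (g j s) L'.
    have [e e0 He] := @cont_lt_near _ (g j) s L' (gc s Ts j) Hlt.
    apply: (@near_right_of _ s _ e e0) => u su ue; apply: ltW; apply: He.
    by rewrite ltr0_norm ?subr_lt0 // opprB ltrBlDl.
  have Heq' : g j s = L' by apply/eqP; rewrite eq_le gs Heq.
  have fmax : forall i, f i s <= f j s.
    by move=> i; have := gs i; rewrite -Heq' /g lerD2r.
  have dneg : df j s + c < 0.
    have := hm s Ts j fmax; rewrite /c => H.
    by lra.
  have := @deriv_neg_right _ (g j) s _ (gd s Ts j) dneg.
  by apply: filterS => u; rewrite Heq' => /ltW.
have := filter_forall _ nearB.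
have Hr := nbhs_right_gt s.
have Ht2 : \forall t \near s^'+, t < t2.
  apply: (@near_right_of _ s _ (t2 - s)); first by rewrite subr_gt0.
  by move=> u _; rewrite addrC subrK.
move=> H.
have [u [[su ut2] Hu]] := filter_ex (filterI (filterI Hr Ht2) (H _)).
have : u <= s by apply: (ub_le_sup hubS); split => //; rewrite (le_trans t1s (ltW su)) ltW.
by rewrite leNgt su.
Qed.

Lemma expo_bound (R : realType) (u g : R -> R) (T a : R) :
  (forall t, T <= t -> is_derive t 1 u (g t - u t)) ->
  (forall t, T <= t -> g t <= a) ->
  forall t, T <= t -> (u t - a) * expR t <= (u T - a) * expR T.
Proof.
move=> hd hg t Tt.
pose F := fun (_ : 'I_1) (s : R) => (u s - a) * expR s.
pose dF := fun (_ : 'I_1) (s : R) => (g s - a) * expR s.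
have hd' : forall s, T <= s -> forall i, is_derive s 1 (F i) (dF i s).
  move=> s Ts i.
  have H1 : is_derive s 1 (fun r => u r - a) (g s - u s).
    have := @is_deriveB R R R u (cst a) s 1 _ _ (hd s Ts) (is_derive_cst a s 1).
    by rewrite subr0.
  have := @is_deriveM R R (fun r => u r - a) expR s 1 _ _ H1 (is_derive_expR s).
  rewrite /F /dF /GRing.scale /=.
  have -> : ((u s - a) * expR s + expR s * (g s - u s)) = (g s - a) * expR s by ring.
  by [].
have hm' : forall s, T <= s -> forall i, (forall j, F j s <= F i s) -> dF i s <= - 0.
  move=> s Ts i _; rewrite /dF oppr0 mulr_le0_ge0 ?subr_le0 ?hg //.
have := @key R 1 F dF T 0 hd' hm' T t ((u T - a) * expR T) (lexx T) Tt _ ord0.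
rewrite mul0r subr0; apply.
by move=> j; rewrite /F.
Qed.

Lemma ex_argmin (R : realType) N (F : 'I_N -> R) (i0 : 'I_N) :
  exists i, forall j, F i <= F j.
Proof.
case: (@arg_minP _ R _ i0 xpredT F) => // i _ H.
by exists i => j; apply: H.
Qed.

Lemma ex_argmax (R : realType) N (F : 'I_N -> R) (i0 : 'I_N) :
  exists i, forall j, F j <= F i.
Proof.
case: (@arg_maxP _ R _ i0 xpredT F) => // i _ H.
by exists i => j; apply: H.
Qed.

Lemma degree_bounds (R : realType) N (W : 'I_N -> 'I_N -> R) i :
  (forall j k, 0 <= W j k <= 1) -> W i i = 1 ->
  1 <= degree W i <= N%:R.
Proof.
move=> hW hii; apply/andP; split.
  rewrite /degree (bigD1 i) //= hii lerDl; apply: sumr_ge0 => j _.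
  by case/andP: (hW i j).
have -> : N%:R = \sum_(j < N) (1:R) by rewrite sumr_const card_ord.
rewrite /degree.
by apply: ler_sum => j _; case/andP: (hW i j).
Qed.

Lemma rhs_max (R : realType) N (phi : R -> R) (X : 'I_N -> R)
    (W : 'I_N -> 'I_N -> R) (c : R) i j0 :
  0 < c -> (forall r, -2 <= r <= 2 -> c < phi r) ->
  (forall j, -1 <= X j <= 1) -> (forall j k, 0 <= W j k <= 1) -> W i i = 1 ->
  (forall j, j != i -> c / 2 <= W i j) ->
  (forall k, X k <= X i) ->
  opinion_rhs phi X W i <= c * c / (2 * N%:R) * (X j0 - X i).
Proof.
move=> c0 hphi hX hW hii hWc hmax.
have /andP[k1 kN] := @degree_bounds R N W i hW hii.
have rng j : -2 <= X j - X i <= 2.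
  by case/andP: (hX j) => ? ?; case/andP: (hX i) => ? ?; apply/andP; split; lra.
have phipos j : c < phi (X j - X i) by apply: hphi.
have terms j : j != i -> W i j * phi (X j - X i) * (X j - X i) <= 0.
  move=> _; apply: mulr_ge0_le0; last by rewrite subr_le0.
  apply: mulr_ge0; first by case/andP: (hW i j).
  by apply: ltW; apply: lt_trans (phipos j).
rewrite /opinion_rhs.
set k := degree W i.
have k0 : 0 < k by rewrite /k; lra.
have kinv0 : 0 < k^-1 by rewrite invr_gt0.
have N0 : 0 < N%:R :> R by lra.
have kinvN : N%:R^-1 <= k^-1 by rewrite lef_pV2 ?posrE.
set S := \sum_(j < N | j != i) _.
have d0 : X j0 - X i <= 0 by rewrite subr_le0.
case: (eqVneq j0 i) => [->|j0i].
  rewrite subrr mulr0; apply: mulr_ge0_le0; first exact: ltW.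
  by apply: sumr_le0 => j; apply: terms.
have SM : S <= W i j0 * phi (X j0 - X i) * (X j0 - X i).
  rewrite /S (bigD1 j0) //= -[leRHS]addr0 lerD2l.
  by apply: sumr_le0 => j /andP[ji _]; apply: terms.
have Wb := hWc j0 j0i.
have Pb := phipos j0.
have WP : c / 2 * c <= W i j0 * phi (X j0 - X i).
  apply: ler_pM => //; [lra | lra | lra].
have SM2 : S <= c / 2 * c * (X j0 - X i).
  apply: (le_trans SM); rewrite -subr_ge0 -mulrBl.
  by apply: mulr_le0; rewrite ?subr_le0.
have -> : c * c / (2 * N%:R) * (X j0 - X i) = N%:R^-1 * (c / 2 * c * (X j0 - X i)).
  by field; rewrite gt_eqF.
have m0 : c / 2 * c * (X j0 - X i) <= 0.
  apply: mulr_ge0_le0 => //; apply: mulr_ge0; lra.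
nra.
Qed.

Lemma rhs_min (R : realType) N (phi : R -> R) (X : 'I_N -> R)
    (W : 'I_N -> 'I_N -> R) (c : R) i j0 :
  0 < c -> (forall r, -2 <= r <= 2 -> c < phi r) ->
  (forall j, -1 <= X j <= 1) -> (forall j k, 0 <= W j k <= 1) -> W i i = 1 ->
  (forall j, j != i -> c / 2 <= W i j) ->
  (forall k, X i <= X k) ->
  c * c / (2 * N%:R) * (X j0 - X i) <= opinion_rhs phi X W i.
Proof.
move=> c0 hphi hX hW hii hWc hmin.
have /andP[k1 kN] := @degree_bounds R N W i hW hii.
have rng j : -2 <= X j - X i <= 2.
  by case/andP: (hX j) => ? ?; case/andP: (hX i) => ? ?; apply/andP; split; lra.
have phipos j : c < phi (X j - X i) by apply: hphi.
have terms j : j != i -> 0 <= W i j * phi (X j - X i) * (X j - X i).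
  move=> _; apply: mulr_ge0; last by rewrite subr_ge0.
  apply: mulr_ge0; first by case/andP: (hW i j).
  by apply: ltW; apply: lt_trans (phipos j).
rewrite /opinion_rhs.
set k := degree W i.
have k0 : 0 < k by rewrite /k; lra.
have kinv0 : 0 < k^-1 by rewrite invr_gt0.
have N0 : 0 < N%:R :> R by lra.
have kinvN : N%:R^-1 <= k^-1 by rewrite lef_pV2 ?posrE.
set S := \sum_(j < N | j != i) _.
have d0 : 0 <= X j0 - X i by rewrite subr_ge0.
case: (eqVneq j0 i) => [->|j0i].
  rewrite subrr mulr0; apply: mulr_ge0; first exact: ltW.
  by apply: sumr_ge0 => j; apply: terms.
have SM : W i j0 * phi (X j0 - X i) * (X j0 - X i) <= S.
  rewrite /S (bigD1 j0) //= -[leLHS]addr0 lerD2l.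
  by apply: sumr_ge0 => j /andP[ji _]; apply: terms.
have Wb := hWc j0 j0i.
have Pb := phipos j0.
have WP : c / 2 * c <= W i j0 * phi (X j0 - X i).
  apply: ler_pM => //; [lra | lra | lra].
have SM2 : c / 2 * c * (X j0 - X i) <= S.
  apply: (le_trans _ SM); rewrite -subr_ge0 -mulrBl.
  by apply: mulr_ge0; rewrite ?subr_ge0.
have -> : c * c / (2 * N%:R) * (X j0 - X i) = N%:R^-1 * (c / 2 * c * (X j0 - X i)).
  by field; rewrite gt_eqF.
have m0 : 0 <= c / 2 * c * (X j0 - X i).
  apply: mulr_ge0 => //; apply: mulr_ge0; lra.
nra.
Qed.

Lemma tail_bound (R : realType) (y T t eps : R) :
  0 < eps -> T + 2 / eps <= t -> y * expR t <= expR T -> y <= eps / 2.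
Proof.
move=> e0 ht H.
have Et : expR t = expR (t - T) * expR T by rewrite -expRD subrK.
have ET := expR_gt0 T.
have H2 : y * expR (t - T) <= 1.
  rewrite Et mulrA in H.
  by rewrite -(ler_pM2r ET) mul1r.
have E1 := expR_ge1Dx (t - T).
have h2 : 2 / eps <= t - T by lra.
have h3 : 2 / eps * eps = 2 by rewrite divfK ?gt_eqF.
case: (leP y 0) => y0; first by lra.
have : y * (2 / eps) <= 1 by nra.
move=> H4.
have : y * (2 / eps) * eps <= eps by nra.
rewrite -mulrA h3 => H5; lra.
Qed.

Lemma cvg_pinfty_of (R : realType) (f : R -> R) (l : R) :
  (forall eps, 0 < eps -> exists M, forall t, M <= t -> `|l - f t| <= eps) ->
  f t @[t --> +oo] --> l.
Proof.
move=> H; apply/cvgrPdist_le => e e0.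
have [M HM] := H e e0.
exists M; split; first exact: num_real.
by move=> t Mt; apply: HM; apply: ltW.
Qed.

Lemma pinfty_of_cvg (R : realType) (f : R -> R) (l : R) :
  f t @[t --> +oo] --> l ->
  forall eps, 0 < eps -> exists M, forall t, M <= t -> `|l - f t| < eps.
Proof.
move=> /cvgrPdist_lt H e e0.
have [M [_ HM]] := H e e0.
by exists (M + 1) => t Mt; apply: HM; lra.
Qed.

Theorem corollary1 (R : realType) (N : nat) (phi : R -> R)
    (x : R -> 'I_N -> R) (w : R -> 'I_N -> 'I_N -> R) (c_phi : R) :
  (forall r : R, -2 <= r <= 2 -> 0 <= phi r <= 1) ->
  lipschitz_on_m22 phi ->
  (forall r : R, -2 <= r <= 2 -> phi (- r) = phi r) ->
  0 < phi 0 ->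
  0 < c_phi ->
  (forall r : R, -2 <= r <= 2 -> c_phi < phi r) ->
  (forall t : R, 0 <= t -> forall i, -1 <= x t i <= 1) ->
  (forall t : R, 0 <= t -> forall i j, 0 <= w t i j <= 1) ->
  (forall t : R, 0 <= t -> forall i, w t i i = 1) ->
  (forall i j : 'I_N, (i <= j)%N -> x 0 i <= x 0 j) ->
  strongly_connected (w 0) ->
  (forall i, {within `[0, +oo[, continuous (fun t => x t i)}) ->
  (forall i j, {within `[0, +oo[, continuous (fun t => w t i j)}) ->
  (forall t : R, 0 < t -> forall i,
     is_derive t 1 (fun s => x s i) (opinion_rhs phi (x t) (w t) i)) ->
  (forall t : R, 0 < t -> forall i j, i != j ->
     is_derive t 1 (fun s => w s i j) (phi (x t j - x t i) - w t i j)) ->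
  (exists xstar : R, forall i, x t i @[t --> +oo] --> xstar) /\
  (forall i j : 'I_N, i != j -> w t i j @[t --> +oo] --> phi 0) /\
  0 < phi 0.
Proof.
move=> hphi [Lp hLp] heven phi0 c0 hc hx hw hii _ _ _ _ hxd hwd.
set c := c_phi in c0 hc *.
have rng t : 0 <= t -> forall i j, -2 <= x t j - x t i <= 2.
  move=> t0 i j; case/andP: (hx t t0 j) => ? ?; case/andP: (hx t t0 i) => ? ?.
  by apply/andP; split; lra.
have wlow : forall t, 2 <= t -> forall i j, i != j -> c / 2 <= w t i j.
  move=> t t2 i j ij.
  have t1 : 1 <= t by lra.
  have hd1 : forall s : R, 1 <= s -> is_derive s 1 (fun s => - w s i j)
      (- phi (x s j - x s i) - - w s i j).
    move=> s s1.
    have := @is_deriveN R R R (fun s => w s i j) s 1 _ (hwd s (lt_le_trans ltr01 s1) i j ij).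
    have -> : - phi (x s j - x s i) - - w s i j = - (phi (x s j - x s i) - w s i j) by ring.
    by [].
  have hg1 : forall s : R, 1 <= s -> - phi (x s j - x s i) <= - c.
    move=> s s1; rewrite lerN2; apply: ltW; apply: hc; apply: rng; lra.
  have H := @expo_bound R (fun s => - w s i j) (fun s => - phi (x s j - x s i)) 1 (- c) hd1 hg1 t t1.
  rewrite /= in H.
  have Et : expR t = expR (t - 1) * expR 1 by rewrite -expRD subrK.
  have E1 := expR_gt0 (1:R).
  have Ege := expR_ge1Dx (t - 1).
  have w10 : 0 <= w 1 i j by case/andP: (hw 1 ler01 i j).
  rewrite Et mulrA in H.
  have H2 : (- w t i j - - c) * expR (t - 1) <= c.
    rewrite -(ler_pM2r E1); apply: (le_trans H).
    by rewrite ler_pM2r //; lra.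
  nra.
have [A hA] : exists A : R, forall i, x t i @[t --> +oo] --> A.
  case: (posnP N) => [N0|Npos].
    by exists 0 => i; have := ltn_ord i; rewrite {2}N0.
  pose i0 := Ordinal Npos.
  set al := c * c / (2 * N%:R).
  have al0 : 0 < al.
    rewrite /al divr_gt0 ?mulr_gt0 // ltr0n //.
  have ht0 : forall t : R, 2 <= t -> 0 <= t by move=> t ht; lra.
  have hdx : forall t : R, 2 <= t -> forall i,
      is_derive t 1 (fun s => x s i) (opinion_rhs phi (x t) (w t) i).
    by move=> t ht i; apply: hxd; lra.
  have hWc t : 2 <= t -> forall i j, j != i -> c / 2 <= w t i j.
    by move=> ht i j ji; apply: wlow => //; rewrite eq_sym.
  have rmax t i j0 : 2 <= t -> (forall k, x t k <= x t i) ->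
      opinion_rhs phi (x t) (w t) i <= al * (x t j0 - x t i).
    move=> ht H.
    exact: (@rhs_max R N phi (x t) (w t) c i j0 c0 hc (hx t (ht0 t ht))
      (hw t (ht0 t ht)) (hii t (ht0 t ht) i) (hWc t ht i) H).
  have rmin t i j0 : 2 <= t -> (forall k, x t i <= x t k) ->
      al * (x t j0 - x t i) <= opinion_rhs phi (x t) (w t) i.
    move=> ht H.
    exact: (@rhs_min R N phi (x t) (w t) c i j0 c0 hc (hx t (ht0 t ht))
      (hw t (ht0 t ht)) (hii t (ht0 t ht) i) (hWc t ht i) H).
  have up : forall t1 t2 L, 2 <= t1 -> t1 <= t2 -> (forall j, x t1 j <= L) ->
      forall j, x t2 j <= L.
    move=> t1 t2 L h1 h12 hL j.
    have hm : forall t, 2 <= t -> forall i, (forall j, x t j <= x t i) ->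
        opinion_rhs phi (x t) (w t) i <= - 0.
      by move=> t ht i hmx; have := rmax t i i ht hmx; rewrite subrr mulr0 oppr0.
    have := @key R N (fun i t => x t i) (fun i t => opinion_rhs phi (x t) (w t) i)
      2 0 hdx hm t1 t2 L h1 h12 hL j.
    by rewrite mul0r subr0.
  have down : forall t1 t2 L, 2 <= t1 -> t1 <= t2 -> (forall j, L <= x t1 j) ->
      forall j, L <= x t2 j.
    move=> t1 t2 L h1 h12 hL j.
    have hd' : forall t : R, 2 <= t -> forall i,
        is_derive t 1 (fun s => - x s i) (- opinion_rhs phi (x t) (w t) i).
      move=> t ht i.
      exact: (@is_deriveN R R R (fun s => x s i) t 1 _ (hdx t ht i)).
    have hm : forall t, 2 <= t -> forall i, (forall j, - x t j <= - x t i) ->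
        - opinion_rhs phi (x t) (w t) i <= - 0.
      move=> t ht i hmx.
      have hmx' : forall k, x t i <= x t k by move=> k; rewrite -lerN2 hmx.
      have := rmin t i i ht hmx'; rewrite subrr mulr0 oppr0 => H; lra.
    have := @key R N (fun i t => - x t i) (fun i t => - opinion_rhs phi (x t) (w t) i)
      2 0 hd' hm t1 t2 (- L) h1 h12 _ j.
    rewrite mul0r subr0 lerN2; apply.
    by move=> k; rewrite lerN2.
  pose SA := [set L | exists2 t, 2 <= t & forall i, x t i <= L].
  pose SB := [set L | exists2 t, 2 <= t & forall i, L <= x t i].
  have SA1 : SA 1.
    by exists 2 => // i; case/andP: (hx 2 (ht0 2 (lexx _)) i).
  have SBm1 : SB (-1).
    by exists 2 => // i; case/andP: (hx 2 (ht0 2 (lexx _)) i).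
  have lbA : lbound SA (-1).
    move=> L [t ht H]; apply: le_trans (H i0).
    by case/andP: (hx t (ht0 t ht) i0).
  have ubB : ubound SB 1.
    move=> L [t ht H]; apply: le_trans (H i0) _.
    by case/andP: (hx t (ht0 t ht) i0).
  have BAs : forall L L', SA L -> SB L' -> L' <= L.
    move=> L L' [t ht H] [t' ht' H'].
    have h1 : t <= t + t' by lra.
    have h2 : t' <= t + t' by lra.
    apply: (le_trans (down t' (t + t') L' ht' h2 H' i0)).
    exact: (up t (t + t') L ht h1 H i0).
  have hlA : has_lbound SA by exists (-1).
  have huB : has_ubound SB by exists 1.
  have neA : SA !=set0 by exists 1.
  have neB : SB !=set0 by exists (-1).
  set A := inf SA.
  set B := sup SB.
  have AL : forall L, SA L -> A <= L by move=> L HL; apply: (ge_inf hlA).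
  have LB : forall L, SB L -> L <= B by move=> L HL; apply: (ub_le_sup huB).
  have BleA : B <= A.
    apply: ge_sup => // L' HL'; apply: lb_le_inf => // L HL; exact: BAs HL HL'.
  have AleB : A <= B.
    rewrite leNgt; apply/negP => hBA.
    set d := A - B.
    have d0 : 0 < d by rewrite /d subr_gt0.
    have hm : forall t, 2 <= t -> forall i, (forall j, x t j <= x t i) ->
        opinion_rhs phi (x t) (w t) i <= - (al * d).
      move=> t ht i hmx.
      have [im Him] := @ex_argmin R N (x t) i0.
      have := rmax t i im ht hmx.
      have xa : A <= x t i by apply: AL; exists t.
      have xb : x t im <= B by apply: LB; exists t.
      have : x t im - x t i <= - d by rewrite /d; lra.
      move=> H1 H2; apply: (le_trans H2).
      by rewrite -mulrN ler_pM2l.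
    pose t2 := 2 + 3 / (al * d).
    have ad0 : 0 < al * d by apply: mulr_gt0.
    have h2 : 2 <= t2 by rewrite /t2 lerDl; apply: ltW; apply: divr_gt0.
    have hL1 : forall j, x 2 j <= 1.
      by move=> j; case/andP: (hx 2 (ht0 2 (lexx _)) j).
    have := @key R N (fun i t => x t i) (fun i t => opinion_rhs phi (x t) (w t) i)
      2 (al * d) hdx hm 2 t2 1 (lexx _) h2 hL1 i0.
    have -> : 1 - al * d * (t2 - 2) = -2.
      rewrite /t2 (_ : 2 + 3 / (al * d) - 2 = 3 / (al * d)); last by ring.
      rewrite [al * d * _]mulrC divfK ?gt_eqF //; lra.
    by case/andP: (hx t2 (ht0 t2 h2) i0) => ? ? H; lra.
  have AB : A = B by apply/eqP; rewrite eq_le AleB BleA.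
  exists A => i; apply: cvg_pinfty_of => e e0.
  have Ae : A < A + e by lra.
  have [LA [tA htA HA] LAlt] := inf_lt neA Ae.
  have Be : B - e < B by lra.
  have [LB0 [tB htB HB] LBgt] := sup_gt neB Be.
  exists (tA + tB) => t ht.
  have h1 : x t i <= LA by apply: (up tA t LA htA _ HA i); lra.
  have h2 : LB0 <= x t i by apply: (down tB t LB0 htB _ HB i); lra.
  by rewrite ler_norml; apply/andP; split; lra.
split; first by exists A.
split => //.
move=> i j ij.
have hd : (fun t => x t j - x t i) t @[t --> +oo] --> 0.
  by rewrite -(subrr A); apply: cvgB; [apply: hA | apply: hA].
apply: cvg_pinfty_of => e e0.
set K := `|Lp| + 1.
have K0 : 0 < K by rewrite /K; have := normr_ge0 Lp; lra.
set eta := e / 2 / K.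
have eta0 : 0 < eta by rewrite /eta !divr_gt0.
have [M HM] := @pinfty_of_cvg R _ 0 hd eta eta0.
set T := `|M| + 1.
have T1 : 1 <= T by rewrite /T; have := normr_ge0 M; lra.
have TM : M <= T by rewrite /T; have := ler_norm M; lra.
have phi01 : phi 0 <= 1 by case/andP: (hphi 0 ltac:(lra)).
have hclose : forall t, T <= t -> `|phi (x t j - x t i) - phi 0| <= e / 2.
  move=> t Tt.
  have t0 : 0 <= t by lra.
  have H1 := hLp (x t j - x t i) 0 (rng t t0 i j) ltac:(lra).
  have H2 := HM t (le_trans TM Tt); rewrite sub0r normrN in H2.
  rewrite subr0 in H1.
  apply: (le_trans H1).
  have : Lp * `|x t j - x t i| <= K * `|x t j - x t i|.
    by apply: ler_wpM2r => //; rewrite /K; have := ler_norm Lp; lra.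
  move=> H3; apply: (le_trans H3).
  have : K * `|x t j - x t i| <= K * eta by apply: ler_wpM2l => //; [lra | exact: ltW].
  by move=> H4; apply: (le_trans H4); rewrite /eta [K * _]mulrC divfK ?gt_eqF.
have hdw : forall s : R, T <= s -> is_derive s 1 (fun s => w s i j)
    (phi (x s j - x s i) - w s i j).
  by move=> s Ts; apply: hwd => //; lra.
have hgU : forall s : R, T <= s -> phi (x s j - x s i) <= phi 0 + e / 2.
  by move=> s Ts; have := hclose s Ts; rewrite ler_norml => /andP[_ ?]; lra.
have hgL : forall s : R, T <= s -> - phi (x s j - x s i) <= - (phi 0 - e / 2).
  by move=> s Ts; have := hclose s Ts; rewrite ler_norml => /andP[? _]; lra.
have hdw' : forall s : R, T <= s -> is_derive s 1 (fun s => - w s i j)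
    (- phi (x s j - x s i) - - w s i j).
  move=> s Ts.
  have := @is_deriveN R R R (fun s => w s i j) s 1 _ (hdw s Ts).
  have -> : - phi (x s j - x s i) - - w s i j = - (phi (x s j - x s i) - w s i j) by ring.
  by [].
exists (T + 2 / e) => t ht.
have tT : T <= t.
  have : 0 < 2 / e by apply: divr_gt0; lra.
  move=> ?; lra.
have wT : 0 <= w T i j <= 1 by apply: hw; lra.
have ET := expR_gt0 T.
have U := @expo_bound R (fun s => w s i j) (fun s => phi (x s j - x s i)) T
  (phi 0 + e / 2) hdw hgU t tT.
have Lo := @expo_bound R (fun s => - w s i j) (fun s => - phi (x s j - x s i)) T
  (- (phi 0 - e / 2)) hdw' hgL t tT.
rewrite /= in U Lo.
have U2 : (w t i j - (phi 0 + e / 2)) * expR t <= expR T.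
  apply: (le_trans U); rewrite -[leRHS]mul1r ler_pM2r //.
  by case/andP: wT; lra.
have Lo2 : (- w t i j - - (phi 0 - e / 2)) * expR t <= expR T.
  apply: (le_trans Lo); rewrite -[leRHS]mul1r ler_pM2r //.
  by case/andP: wT; lra.
have U3 := @tail_bound R _ T t e e0 ht U2.
have Lo3 := @tail_bound R _ T t e e0 ht Lo2.
by rewrite ler_norml; apply/andP; split; lra.
Qed.
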